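(* Let $P$ be a prior distribution over $\mathcal F$, let $c>0$, $h\in(0,1]$, and $c_2$ with $0<c_2<h^2c$. Let $\kappa>0$, $\delta\in(0,1)$, $m\ge1$ and $\lambda>0$ with $$\frac{\lambda}{m}\le\min\Big(\frac{h^2c-c_2}{2(1+h^2c)(1+c_2)},\;\frac{4c_2h^2}{(1+c_2)(1+c_2h^2)}\Big(\kappa+\log\frac4\delta\Big)\Big).$$ Then with probability at least $1-\delta$ over $S=(z_1,\dots,z_m)\sim\mathcal D^m$, $$\sup_{Q:\ \mathrm{KL}(Q\|P)\le\kappa}\Big[\mathcal L_{\mathcal D}(Q)-\hat{\mathcal L}_S(Q)-\frac{c}{m}\sum_{i=1}^m\mathbb E_{f\sim Q}\big[f(z_i)-(1+h)\ell_Q(z_i)\big]^2\Big]\le\frac{4}{\lambda}\Big(\kappa+\log\frac4\delta\Big).$$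
   Context: Let $(\mathcal Z,\Sigma)$ be a measurable space and $\mathcal D$ a probability distribution on $\mathcal Z$. Let $\mathcal F$ be a class of measurable functions $f:\mathcal Z\to\{0,1\}$, equipped with a $\sigma$-algebra for which $(f,z)\mapsto f(z)$ is jointly measurable; ''distributions over $\mathcal F$'' are probability measures on it. $S=(z_1,\dots,z_m)\sim\mathcal D^m$ is an i.i.d. sample. For a distribution $Q$ over $\mathcal F$: $\ell_Q(z)=\mathbb E_{f\sim Q}f(z)$, $\mathcal L_{\mathcal D}(Q)=\mathbb E_{f\sim Q}\mathbb E_{z\sim\mathcal D}f(z)$, $\hat{\mathcal L}_S(Q)=\frac1m\sum_{i=1}^m\ell_Q(z_i)$. $\mathrm{KL}(Q\|P)$ is the relative entropy ($+\infty$ unless $Q\ll P$). The prior $P$ does not depend on $S$. The supremum is assumed measurable (or the probability is understood as outer probability). *)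

(* Defs.v *)
From HB Require Import structures.
From mathcomp Require Import all_boot all_order all_algebra.
From mathcomp Require Import all_classical all_reals all_analysis.
Set Implicit Arguments.
Unset Strict Implicit.
Unset Printing Implicit Defensive.
Import Order.TTheory GRing.Theory Num.Theory.
Local Open Scope classical_set_scope.
Local Open Scope ring_scope.

Definition is_density {dF} {F : measurableType dF} {R : realType}
  (P Q : probability F R) (g : F -> R) : Prop :=
  [/\ measurable_fun [set: F] g, (forall f, 0 <= g f) &
      forall A, measurable A -> Q A = (\int[P]_(f in A) (g f)%:E)%E].

(* Relative entropy KL(Q || P) = \int (dQ/dP) log (dQ/dP) dP if Q << P
   (i.e. a density exists), and +oo otherwise (infimum of the empty set).
   All densities agree P-a.e., so the infimum is the common value. *)
Definition KL {dF} {F : measurableType dF} {R : realType}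
  (Q P : probability F R) : \bar R :=
  ereal_inf [set (\int[P]_f (g f * ln (g f))%:E)%E | g in is_density P Q].

Definition ellQ {dF dZ} {F : measurableType dF} {Z : measurableType dZ}
  {R : realType} (ev : F -> Z -> R) (Q : probability F R) (z : Z) : R :=
  fine (\int[Q]_f (ev f z)%:E)%E.

Definition LD {dF dZ} {F : measurableType dF} {Z : measurableType dZ}
  {R : realType} (ev : F -> Z -> R) (D : probability Z R)
  (Q : probability F R) : R :=
  fine (\int[Q]_f \int[D]_z (ev f z)%:E)%E.

Definition Lhat {dF dZ} {F : measurableType dF} {Z : measurableType dZ}
  {R : realType} (ev : F -> Z -> R) (m : nat) (Q : probability F R)
  (S : 'I_m -> Z) : R :=
  (\sum_(i < m) ellQ ev Q (S i)) / m%:R.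

Definition varterm {dF dZ} {F : measurableType dF} {Z : measurableType dZ}
  {R : realType} (ev : F -> Z -> R) (h : R) (Q : probability F R) (z : Z) : R :=
  fine (\int[Q]_f ((ev f z - (1 + h) * ellQ ev Q z) ^+ 2)%:E)%E.

Definition iid_sample {dO dZ} {Omega : measurableType dO}
  {Z : measurableType dZ} {R : realType} (Pr : probability Omega R)
  (D : probability Z R) (m : nat) (X : 'I_m -> Omega -> Z) : Prop :=
  (forall i, measurable_fun [set: Omega] (X i)) /\
  forall A : 'I_m -> set Z, (forall i, measurable (A i)) ->
    Pr [set w | forall i, A i (X i w)] = (\prod_(i < m) D (A i))%E.

(* Main.v *)
Require Import Defs.
From HB Require Import structures.
From mathcomp Require Import all_boot all_order all_algebra.
From mathcomp Require Import all_classical all_reals all_analysis.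
From mathcomp Require Import measurable_realfun.
From mathcomp Require Import ring lra.
Import Order.TTheory GRing.Theory Num.Theory.
Local Open Scope classical_set_scope.
Local Open Scope ring_scope.

Section com.
Context {dF : measure_display} {F : measurableType dF} {R : realType}.
Variables (P Q : probability F R) (g : F -> R).
Hypothesis hg : is_density P Q g.

Import HBNNSimple.

Lemma density_change (f : F -> \bar R) : (forall x, (0 <= f x)%E) ->
    measurable_fun setT f ->
  (\int[P]_x (f x * (g x)%:E) = \int[Q]_x f x)%E.
Proof.
case: hg => mg g0 gQ.
move=> f0 mf.
have mE : measurable [set: F] by [].
pose h := nnsfun_approx mE mf.
have -> : (\int[Q]_x f x =
    lim (\int[Q]_x (EFin \o h n) x @[n --> \oo]))%E.
  have fE x : f x = lim ((EFin \o h n) x @[n --> \oo]).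
    by apply/esym/cvg_lim => //; exact: cvg_nnsfun_approx.
  under eq_integral => x _ do rewrite fE.
  apply: monotone_convergence => //.
  - move=> n; apply/measurable_EFinP.
    by apply: (measurable_funS measurableT) => //; exact/measurable_funP.
  - by move=> n x Ex //=; rewrite lee_fin.
  - by move=> x Ex a b ab; rewrite lee_fin; exact/lefP/nd_nnsfun_approx.
have -> : (\int[P]_x (f x * (g x)%:E) =
    lim (\int[P]_x ((EFin \o h n) x * (g x)%:E) @[n --> \oo]))%E.
  have fg x : (f x * (g x)%:E = lim (((EFin \o h n) x * (g x)%:E) @[n --> \oo]))%E.
    by apply/esym/cvg_lim => //; apply: cvgeZr => //; exact: cvg_nnsfun_approx.
  under eq_integral => x _ do rewrite fg.
  apply: monotone_convergence => [//| | |].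
  - move=> n; apply/emeasurable_funM; apply/measurable_funTS.
      exact/measurable_EFinP.
    exact/measurable_EFinP.
  - by move=> n x Ex /=; rewrite mule_ge0 ?lee_fin.
  - by move=> x Ex a b ab/=; rewrite lee_wpmul2r ?lee_fin//; exact/lefP/nd_nnsfun_approx.
suff suf n : (\int[P]_x ((EFin \o h n) x * (g x)%:E) =
    \int[Q]_x (EFin \o h n) x)%E.
  by under eq_fun do rewrite suf.
transitivity (\int[Q]_x
   (\sum_(y \in range (h n)) (y * \1_(h n @^-1` [set y]) x)%:E))%E; last first.
  by apply: eq_integral => t tE; rewrite /= fimfunE -fsumEFin.
have indich m r : measurable_fun setT (fun x => (r * \1_(h m @^-1` [set r]) x)%:E).
  by apply: (measurable_comp measurableT) => //; exact: measurable_funM.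
rewrite ge0_integral_fsum//; last by move=> m y Ey; exact: nnfun_muleindic_ge0.
transitivity (\int[P]_x (\sum_(y \in range (h n))
    ((y * \1_(h n @^-1` [set y]) x)%:E * (g x)%:E)))%E.
  under [RHS]eq_integral => x xE.
    rewrite -ge0_mule_fsuml => [|y]; last exact: nnfun_muleindic_ge0.
    rewrite fsumEFin // -(fimfunE _ x); over.
  by [].
rewrite ge0_integral_fsum//; last 2 first.
  - move=> y; apply: emeasurable_funM => //.
    exact/measurable_EFinP.
  - move=> m y Ey; apply: mule_ge0; last by rewrite lee_fin.
    by rewrite EFinM nnfun_muleindic_ge0.
apply: eq_fsbigr => r rhn.
under [RHS]eq_integral do rewrite EFinM.
rewrite integralZl_indic_nnsfun => //.
under eq_integral do rewrite EFinM -muleA.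
rewrite ge0_integralZl//.
- under eq_integral do rewrite muleC.
  rewrite (eq_integral ((EFin \o g) \_ (h n @^-1` [set r]))); last first.
    by move=> x xE; rewrite epatch_indic.
  have mh : measurable (h n @^-1` [set r]) by exact: measurable_sfunP.
  rewrite -integral_mkcondr integral_indic// setIT setTI; congr (_ * _)%E; exact/esym/gQ.
- apply: emeasurable_funM; first exact/measurable_EFinP.
  exact/measurable_EFinP.
- by move=> t Et; rewrite mule_ge0 ?lee_fin.
- by move: rhn; rewrite inE => -[t _ <-]; rewrite lee_fin.
Qed.

End com.

Lemma young (R : realType) (u v : R) : 0 <= u -> u * v <= u * ln u - u + expR v.
Proof.
rewrite le_eqVlt => /orP[/eqP<-|u0].
  by rewrite !mul0r subr0 add0r expR_ge0.
have := expR_ge1Dx (v - ln u).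
rewrite expRD expRN lnK ?posrE// => H.
have := H; rewrite -(ler_pM2l u0) mulrCA mulfV ?gt_eqF// mulr1 => H2.
move: H2; rewrite !mulrDr mulr1 mulrN => H2.
by rewrite -subr_ge0; rewrite -subr_ge0 in H2; move: H2; congr (0 <= _); ring.
Qed.

Section ints.
Context {d : measure_display} {T : measurableType d} {R : realType}.
Variable mu : probability T R.

Lemma muT : mu [set: T] = 1%E.
Proof. exact: probability_setT. Qed.

Lemma int01 (f : T -> R) : measurable_fun [set: T] f ->
  (forall x, 0 <= f x <= 1) ->
  (\int[mu]_x (f x)%:E = (fine (\int[mu]_x (f x)%:E))%:E)%E /\
  0 <= fine (\int[mu]_x (f x)%:E) <= 1.
Proof.
move=> mf f01.
have i0 : (0 <= \int[mu]_x (f x)%:E)%E.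
  by apply: integral_ge0 => x _; rewrite lee_fin; case/andP: (f01 x).
have i1 : (\int[mu]_x (f x)%:E <= 1)%E.
  have -> : (1 = \int[mu]_x (cst 1%:E) x)%E by rewrite integral_cst// mul1e; apply/esym; exact: probability_setT.
  apply: ge0_le_integral => //.
  - by move=> x _; rewrite lee_fin; case/andP: (f01 x).
  - exact/measurable_EFinP.
  - by move=> x _; rewrite lee_fin; case/andP: (f01 x).
have fin : (\int[mu]_x (f x)%:E)%E \is a fin_num.
  by rewrite ge0_fin_numE// (le_lt_trans i1)// ltry.
split; first by rewrite fineK.
by apply/andP; split; rewrite -lee_fin fineK.
Qed.

Lemma int_compl (f : T -> R) : measurable_fun [set: T] f ->
  (forall x, 0 <= f x <= 1) ->
  (\int[mu]_x (1 - f x)%:E = (1 - fine (\int[mu]_x (f x)%:E))%:E)%E.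
Proof.
move=> mf f01.
have [E1 _] := int01 _ mf f01.
have mg : measurable_fun [set: T] (fun x => 1 - f x).
  by apply: measurable_funB => //.
have [E2 _] := int01 _ mg (fun x => ltac:(case/andP: (f01 x) => a b; apply/andP; split; lra)).
have H : (\int[mu]_x ((1 - f x)%:E + (f x)%:E) = 1)%E.
  under eq_integral do rewrite -EFinD subrK.
  by rewrite integral_cst// mul1e; exact: probability_setT.
move: H; rewrite ge0_integralD//; first last.
- exact/measurable_EFinP.
- by move=> x _; rewrite lee_fin; case/andP: (f01 x).
- exact/measurable_EFinP.
- by move=> x _; rewrite lee_fin; case/andP: (f01 x) => a b; lra.
rewrite E2 [X in (_ + X)%E]E1 -EFinD => /eqP; rewrite eqe => /eqP H.
have -> : 1 - fine (\int[mu]_x (f x)%:E) = fine (\int[mu]_x (1 - f x)%:E) by rewrite -[X in X - _]H addrK.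
by [].
Qed.

Lemma int_add1 (f : T -> R) : measurable_fun [set: T] f ->
  (forall x, -1 <= f x) ->
  (\int[mu]_x (f x + 1)%:E = \int[mu]_x (f x)%:E + 1)%E.
Proof.
move=> mf f1.
pose fp x := Num.max (f x) 0.
pose fn x := Num.max (- f x) 0.
have mfp : measurable_fun [set: T] fp by apply: measurable_maxr.
have mfn : measurable_fun [set: T] fn.
  by apply: measurable_maxr => //; exact: measurableT_comp.
have fn01 x : 0 <= fn x <= 1.
  rewrite /fn; apply/andP; split; first by rewrite le_max lexx orbT.
  by rewrite ge_max ler01 andbT; have := f1 x; lra.
have [En _] := int01 _ mfn fn01.
have Ec := int_compl _ mfn fn01.
have fp0 x : 0 <= fp x by rewrite /fp le_max lexx orbT.
have -> : (\int[mu]_x (f x)%:E = \int[mu]_x (fp x)%:E - \int[mu]_x (fn x)%:E)%E.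
  rewrite integralE; congr (_ - _)%E; apply: eq_integral => x _.
    by rewrite funeposE /fp EFin_max.
  by rewrite funenegE /fn EFin_max EFinN.
have -> : (\int[mu]_x (f x + 1)%:E = \int[mu]_x ((fp x)%:E + (1 - fn x)%:E))%E.
  apply: eq_integral => x _; rewrite -EFinD; congr (_%:E).
  rewrite /fp /fn; case: (lerP 0 (f x)) => h0.
    by case: (lerP 0 (- f x)) => h1; lra.
  by case: (lerP 0 (- f x)) => h1; lra.
rewrite ge0_integralD//; last 3 first.
- exact/measurable_EFinP.
- by move=> x _; rewrite lee_fin; case/andP: (fn01 x) => a b; lra.
- apply/measurable_EFinP; exact: measurable_funB.
rewrite Ec En EFinB -addeA; congr (_ + _)%E.
by rewrite addeC.
by move=> x _; rewrite lee_fin.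
Qed.

Lemma int3 (f1 f2 f3 : T -> R) :
  measurable_fun [set: T] f1 -> measurable_fun [set: T] f2 -> measurable_fun [set: T] f3 ->
  (forall x, 0 <= f1 x) -> (forall x, 0 <= f2 x) -> (forall x, 0 <= f3 x) ->
  (\int[mu]_x (f1 x + f2 x + f3 x)%:E =
   \int[mu]_x (f1 x)%:E + \int[mu]_x (f2 x)%:E + \int[mu]_x (f3 x)%:E)%E.
Proof.
move=> m1 m2 m3 p1 p2 p3.
under eq_integral do rewrite EFinD.
rewrite ge0_integralD//; first last.
- exact/measurable_EFinP.
- by move=> x _; rewrite lee_fin.
- by apply/measurable_EFinP; exact: measurable_funD.
- by move=> x _; rewrite lee_fin addr_ge0.
under eq_integral do rewrite EFinD.
rewrite ge0_integralD//;
  try (by move=> x _; rewrite lee_fin); try exact/measurable_EFinP.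
Qed.

End ints.

Section indep.
Context {dO dZ : measure_display} {Omega : measurableType dO} {Z : measurableType dZ}
  {R : realType} (Pr : probability Omega R) (D : probability Z R) (m : nat)
  (X : 'I_m -> Omega -> Z).
Hypothesis hX : iid_sample Pr D X.

Lemma prod_indic (B : 'I_m -> set Z) (w : Omega) :
  \prod_(i < m) (\1_(B i) (X i w) : R) = \1_[set w | forall i, B i (X i w)] w.
Proof.
case: (pselect (forall i, B i (X i w))) => H.
  rewrite indicE mem_set// big1// => i _.
  by rewrite indicE mem_set.
have [i Hi] : exists i, ~ B i (X i w).
  by apply: contra_notP H => H i; apply: contra_notP H => Hi; exists i.
rewrite indicE memNset// (bigD1 i)//= indicE memNset// mul0r. exact: erefl.
Qed.

Definition Ev (A : set Z) (s : {ffun 'I_m -> bool}) :=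
  [set w | forall i, (if s i then A else ~` A) (X i w)].

Lemma measurable_Ev A s : measurable A -> measurable (Ev A s).
Proof.
move=> mA.
have -> : Ev A s = \bigcap_(i in [set: 'I_m]) (X i @^-1` (if s i then A else ~` A)).
  by apply/seteqP; split => w /=; [move=> H i _; exact: H | move=> H i; exact: H].
apply: fin_bigcap_measurable; first exact: finite_finset.
move=> i _; rewrite -[X in measurable X]setTI; apply: (hX.1 i) => //.
by case: (s i) => //; exact: measurableC.
Qed.

Lemma iid_exp (A : set Z) (r : R) : measurable A -> 0 <= r ->
  (\int[Pr]_w (\prod_(i < m) (r * \1_A (X i w) + \1_(~` A) (X i w)))%:E =
   ((r * fine (D A) + (1 - fine (D A))) ^+ m)%:E)%E.
Proof.
move=> mA r0.
pose c (j : bool) : R := if j then r else 1.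
have pt w : \prod_(i < m) (r * \1_A (X i w) + \1_(~` A) (X i w)) =
    \sum_(s : {ffun 'I_m -> bool}) (\prod_(i < m) c (s i)) * \1_(Ev A s) w.
  transitivity (\prod_(i < m) \sum_(j : bool)
      (c j * \1_(if j then A else ~` A) (X i w))).
    by apply: eq_bigr => i _; rewrite big_bool /= mul1r.
  rewrite bigA_distr_bigA /=; apply: eq_bigr => s _.
  by rewrite big_split /= prod_indic.
under eq_integral do rewrite pt -sumEFin.
rewrite ge0_integral_sum//; first last.
- move=> s w _; rewrite lee_fin; apply: mulr_ge0.
    by apply: prodr_ge0 => i _; rewrite /c; case: (s i).
  by rewrite /indic; case: (_ \in _).
- move=> s; apply/measurable_EFinP; apply: measurable_funM => //.
  apply: measurable_indic; exact: measurable_Ev.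
have DA : D A = (fine (D A))%:E by rewrite fineK// fin_num_measure.
have DC : D (~` A) = (1 - fine (D A))%:E.
  by rewrite probability_setC// [in LHS]DA EFinB.
transitivity (\sum_(s : {ffun 'I_m -> bool})
   ((\prod_(i < m) c (s i)) * \prod_(i < m) (if s i then fine (D A) else 1 - fine (D A)))%:E)%E.
  apply: eq_bigr => s _.
  under eq_integral do rewrite EFinM.
  rewrite ge0_integralZl_EFin//; try (by apply: prodr_ge0 => i _; rewrite /c; case: (s i));
    try (by move=> w _; rewrite lee_fin /indic; case: (_ \in _));
    try (by apply/measurable_EFinP; apply: measurable_indic; exact: measurable_Ev).
  rewrite integral_indic ?setIT//; last exact: measurable_Ev.
  rewrite EFinM; congr (_ * _)%E.
  rewrite -prodEFin.
  transitivity (\prod_(i < m) D (if s i then A else ~` A))%E.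
    apply: (hX.2 (fun i => if s i then A else ~` A)).
    by move=> i; case: (s i) => //; exact: measurableC.
  by apply: eq_bigr => i _; case: (s i).
rewrite sumEFin; congr (_%:E).
under eq_bigr do rewrite -big_split /=.
rewrite -(bigA_distr_bigA (fun (i : 'I_m) (j : bool) =>
   c j * (if j then fine (D A) else 1 - fine (D A)))) /=.
by rewrite prodr_const card_ord big_bool /= mul1r.
Qed.

End indep.

Lemma exp_mgf (R : realType) (lam t b p : R) (m : nat) :
  lam = t * m%:R -> 0 <= t -> t * (1 + b) <= b -> 0 <= b -> 0 <= p <= 1 ->
  expR (lam * p) * ((expR (- (t * (1 + b))) * p + (1 - p)) ^+ m) <= 1.
Proof.
move=> -> t0 tb b0 /andP[p0 p1].
set k := t * (1 + b).
set r := expR (- k).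
have k0 : 0 <= k by rewrite /k mulr_ge0//; lra.
have r0 : 0 <= r by exact: expR_ge0.
have ek : 1 + k <= expR k by exact: expR_ge1Dx.
have rk : r * expR k = 1 by rewrite /r expRN mulVf// gt_eqF// expR_gt0.
have t1 : t <= 1.
  have : t * b <= b by nra.
  nra.
have hr : r <= 1 - t.
  have h1 : 1 <= (1 - t) * (1 + k) by rewrite /k; nra.
  have h2 : (1 - t) * (1 + k) <= (1 - t) * expR k by apply: ler_wpM2l; lra.
  nra.
have base : r * p + (1 - p) <= expR (- ((1 - r) * p)).
  by have := expR_ge1Dx (- ((1 - r) * p)); lra.
have base0 : 0 <= r * p + (1 - p) by nra.
have pw : (r * p + (1 - p)) ^+ m <= expR (- ((1 - r) * p)) ^+ m.
  by apply: lerXn2r => //; rewrite nnegrE// expR_ge0.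
apply: (le_trans (y := expR (t * m%:R * p) * expR (- ((1 - r) * p)) ^+ m)).
  by apply: ler_wpM2l => //; exact: expR_ge0.
rewrite -expRM_natl -expRD expR_le1.
have : 0 <= m%:R * p :> R by rewrite mulr_ge0.
nra.
Qed.

Lemma var_lb {dF dZ : measure_display} {F : measurableType dF} {Z : measurableType dZ}
  {R : realType} (ev : F -> Z -> R) (Q : probability F R) (h : R) (z : Z) :
  (forall f, ev f z = 0 \/ ev f z = 1) ->
  measurable_fun [set: F] (fun f => ev f z) -> 0 < h -> h <= 1 ->
  h ^+ 2 * ellQ ev Q z <= varterm ev h Q z.
Proof.
move=> e01 me h0 h1.
have e01' f : 0 <= ev f z <= 1 by case: (e01 f) => ->; rewrite ?lexx ?ler01.
have [El /andP[l0 l1]] := int01 Q _ me e01'.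
rewrite /varterm /ellQ.
set l := fine _.
set a := (1 + h) * l.
have a0 : 0 <= a by rewrite /a mulr_ge0//; lra.
have ms : measurable_fun [set: F] (fun f => (ev f z - a) ^+ 2).
  by apply: measurable_funX; apply: measurable_funB.
have key : (\int[Q]_f ((ev f z - a) ^+ 2)%:E + (2 * a * l)%:E = (l + a ^+ 2)%:E)%E.
  have -> : ((2 * a * l)%:E = \int[Q]_f (2 * a * ev f z)%:E)%E.
    under eq_integral do rewrite EFinM.
    rewrite ge0_integralZl_EFin//; first last.
    - by rewrite mulr_ge0.
    - exact/measurable_EFinP.
    - by move=> x _; rewrite lee_fin; case/andP: (e01' x).
    by rewrite El EFinM.
  rewrite -ge0_integralD//; [ |
    by move=> x _; rewrite lee_fin sqr_ge0 |
    exact/measurable_EFinP |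
    by move=> x _; rewrite lee_fin; apply: mulr_ge0; [apply: mulr_ge0 | case/andP: (e01' x)] |
    exact/measurable_EFinP/measurable_funM].
  transitivity (\int[Q]_f ((ev f z)%:E + (a ^+ 2)%:E))%E.
    apply: eq_integral => f _; rewrite -EFinD; congr (_%:E).
    by case: (e01 f) => ->; ring.
  rewrite ge0_integralD//; [ |
    by move=> x _; rewrite lee_fin; case/andP: (e01' x) |
    exact/measurable_EFinP |
    by move=> x _; rewrite lee_fin sqr_ge0].
  rewrite El EFinD; congr (_ + _)%E.
  rewrite (_ : (fun _ => (a ^+ 2)%:E) = cst (a ^+ 2)%:E)// integral_cst//.
  transitivity ((a ^+ 2)%:E * 1)%E; last by rewrite mule1.
  congr (_ * _)%E; exact: probability_setT.
have S0 : (0 <= \int[Q]_f ((ev f z - a) ^+ 2)%:E)%E.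
  by apply: integral_ge0 => x _; rewrite lee_fin sqr_ge0.
move: key S0; case: (\int[Q]_f ((ev f z - a) ^+ 2)%:E)%E => [s| |] //= key S0.
move: key => /eqP; rewrite -EFinD eqe => /eqP key.
have -> : s = l + a ^+ 2 - 2 * a * l by rewrite -key addrK.
rewrite -subr_ge0 /a.
have -> : l + ((1 + h) * l) ^+ 2 - 2 * ((1 + h) * l) * l - h ^+ 2 * l =
  (1 - h ^+ 2) * (l * (1 - l)) by ring.
apply: mulr_ge0; last by apply: mulr_ge0; [exact: l0 | rewrite subr_ge0; exact: l1].
have : h ^+ 2 <= 1 by rewrite expr2; nra.
lra.
Qed.

Theorem mainTheorem3 (R : realType)
  (dZ : measure_display) (Z : measurableType dZ) (D : probability Z R)
  (dF : measure_display) (F : measurableType dF) (ev : F -> Z -> R)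
  (ev01 : forall f z, ev f z = 0 \/ ev f z = 1)
  (ev_inj : injective ev)
  (ev_meas : measurable_fun [set: F * Z] (fun p => ev p.1 p.2))
  (P : probability F R) (c h c2 kappa delta lambda : R) (m : nat)
  (hc : 0 < c) (hh0 : 0 < h) (hh1 : h <= 1)
  (hc2 : 0 < c2) (hc2' : c2 < h ^+ 2 * c)
  (hkappa : 0 < kappa) (hd0 : 0 < delta) (hd1 : delta < 1)
  (hm : (1 <= m)%N) (hl : 0 < lambda)
  (hlm : lambda / m%:R <=
     Num.min ((h ^+ 2 * c - c2) / (2 * (1 + h ^+ 2 * c) * (1 + c2)))
             ((4 * c2 * h ^+ 2) / ((1 + c2) * (1 + c2 * h ^+ 2))
                * (kappa + ln (4 / delta))))
  (dO : measure_display) (Omega : measurableType dO)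
  (Pr : probability Omega R) (X : 'I_m -> Omega -> Z)
  (hX : iid_sample Pr D X) :
  exists E : set Omega,
    [/\ measurable E, ((1 - delta)%:E <= Pr E)%E &
      forall w, E w ->
      forall Q : probability F R, (KL Q P <= kappa%:E)%E ->
        LD ev D Q - Lhat ev Q (fun i => X i w)
          - c / m%:R * \sum_(i < m) varterm ev h Q (X i w)
        <= 4 / lambda * (kappa + ln (4 / delta))].
Proof.
set b := h ^+ 2 * c.
set t := lambda / m%:R.
set k := t * (1 + b).
have m0 : (0 < m%:R :> R) by rewrite ltr0n.
have t0 : 0 < t by rewrite divr_gt0.
have lamt : lambda = t * m%:R by rewrite /t divfK// gt_eqF.
have b0 : 0 < b by rewrite /b mulr_gt0// exprn_gt0.
have tb : t * (1 + b) <= b.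
  have ta : t <= (b - c2) / (2 * (1 + b) * (1 + c2)).
    by move: hlm; rewrite le_min => /andP[].
  have pos : 0 < 2 * (1 + b) * (1 + c2) by rewrite !mulr_gt0//; lra.
  move: ta; rewrite ler_pdivlMr// => ta.
  have : t * (1 + b) <= t * (2 * (1 + b) * (1 + c2)).
    have : 1 + b <= 2 * (1 + b) * (1 + c2) by nra.
    by move=> H; apply: ler_wpM2l => //; exact: ltW.
  lra.
have k0 : 0 <= k by rewrite /k mulr_ge0//; [exact: ltW | lra].
have mev f : measurable_fun [set: Z] (ev f).
  exact: (measurable_fun_pair2 (f := fun p => ev p.1 p.2) f ev_meas).
have mevz z : measurable_fun [set: F] (fun f => ev f z).
  exact: (measurable_fun_pair1 (f := fun p => ev p.1 p.2) z ev_meas).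
have e01' f z : 0 <= ev f z <= 1 by case: (ev01 f z) => ->; rewrite ?lexx ?ler01.
pose p f := fine (\int[D]_z (ev f z)%:E).
have pE f : (\int[D]_z (ev f z)%:E = (p f)%:E)%E /\ 0 <= p f <= 1.
  exact: (int01 D _ (mev f) (e01' f)).
have pm : measurable_fun [set: F] p.
  have mF := measurable_fun_fubini_tonelli_F (m2 := D) (fun q : F * Z => (ev q.1 q.2)%:E)
    ((measurable_EFinP _ (fun q : F * Z => ev q.1 q.2)).2 ev_meas)
    (fun q => ltac:(rewrite lee_fin; case/andP: (e01' q.1 q.2) => //)).
  exact: (measurableT_comp (fine_measurable measurableT) mF).
pose A f := ev f @^-1` [set 1].
have mA f : measurable (A f).
  by rewrite -[X in measurable X]setTI; apply: mev => //; exact: measurable_set1.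
have evI f z : ev f z = \1_(A f) z.
  rewrite indicE; case: (ev01 f z) => H.
    by rewrite memNset// /A /= H => /esym/eqP; rewrite oner_eq0.
  by rewrite mem_set.
have DA f : p f = fine (D (A f)).
  rewrite /p; congr fine.
  under eq_integral do rewrite evI.
  by rewrite integral_indic// setIT.
pose phi f w := lambda * p f - k * \sum_(i < m) ev f (X i w).
pose G (q : F * Omega) := (expR (phi q.1 q.2))%:E.
have G0 q : (0 <= G q)%E by rewrite lee_fin expR_ge0.
have mG : measurable_fun [set: F * Omega] G.
  apply/measurable_EFinP; apply: measurableT_comp => //.
  apply: measurable_funB.
    apply: measurable_funM => //; exact: measurableT_comp.
  apply: measurable_funM => //; apply: measurable_sum => i.
  exact: (measurableT_comp (f := fun p : F * Z => ev p.1 p.2)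
    (g := fun q : F * Omega => (q.1, X i q.2)) ev_meas
    (measurable_fun_pair measurable_fst (measurableT_comp (hX.1 i) measurable_snd))).
have mgf f : (\int[Pr]_w G (f, w) <= 1)%E.
  have pt w : expR (phi f w) = expR (lambda * p f) *
      \prod_(i < m) (expR (- k) * \1_(A f) (X i w) + \1_(~` A f) (X i w)).
    rewrite /phi expRD -mulNr mulr_sumr expR_sum; congr (_ * _).
    apply: eq_bigr => i _; rewrite evI !indicE.
    case: (boolP (X i w \in A f)) => H.
      by rewrite mulr1 in_setC H /= addr0 mulr1.
    by rewrite mulr0 expR0 mulr0 add0r in_setC H.
  rewrite /G /=; under eq_integral do rewrite pt EFinM.
  rewrite ge0_integralZl_EFin//; last 2 first.
  - move=> w _; rewrite lee_fin; apply: prodr_ge0 => i _.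
    by apply: addr_ge0; [apply: mulr_ge0; [exact: expR_ge0|] |]; rewrite indicE.
  - apply/measurable_EFinP; apply: measurable_prod => i _.
    apply: measurable_funD; first apply: measurable_funM => //.
    + exact: (measurableT_comp (measurable_indic (mA f)) (hX.1 i)).
    + exact: (measurableT_comp (measurable_indic (measurableC (mA f))) (hX.1 i)).
  rewrite (iid_exp _ _ _ _ hX) ?expR_ge0// -EFinM lee_fin -DA.
  by apply: exp_mgf; [exact: lamt | exact: ltW | exact: tb | exact: ltW | exact: (pE f).2].
pose H w := (\int[P]_f G (f, w))%E.
have mH : measurable_fun [set: Omega] H.
  exact: (measurable_fun_fubini_tonelli_G (m1 := P) G mG G0).
have H0 w : (0 <= H w)%E by apply: integral_ge0 => f _.
have Hint : (\int[Pr]_w H w <= 1)%E.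
  have T1 := fubini_tonelli1 (m1 := P) (m2 := Pr) G mG G0.
  have T2 := fubini_tonelli2 (m1 := P) (m2 := Pr) G mG G0.
  rewrite /fubini_F /fubini_G in T1 T2.
  rewrite /H -T2 T1.
  have -> : (1 = \int[P]_f (cst 1%:E) f)%E.
    by rewrite integral_cst// mul1e; apply/esym; exact: probability_setT.
  apply: ge0_le_integral => //;
    try (by move=> f _; apply: integral_ge0);
    try (exact: (measurable_fun_fubini_tonelli_F (m2 := Pr) G mG G0));
    try (by move=> f _; exact: mgf).
pose E := [set w | (H w <= (delta^-1)%:E)%E].
have mE : measurable E.
  rewrite -[X in measurable X]setTI.
  exact: (measurable_lee measurableT mH (measurable_cst _)).
exists E; split => //.
  have hC : ((delta^-1)%:E * Pr (~` E) <= 1)%E.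
    apply: le_trans Hint.
    apply: (@le_trans _ _ (\int[Pr]_(w in ~` E) H w)%E); last first.
      by apply: ge0_subset_integral => //; try exact: measurableC; move=> w _; exact: H0.
    rewrite -integral_cst; last exact: measurableC.
    apply: ge0_le_integral => //; try exact: measurableC;
      try (by move=> w _; rewrite lee_fin invr_ge0 ltW);
      try (by apply: measurable_funTS).
    by move=> w /= /negP; rewrite -ltNge => /ltW.
  have PE : Pr E = (fine (Pr E))%:E by rewrite fineK// fin_num_measure.
  move: hC; rewrite probability_setC// PE -EFinB -EFinM lee_fin => hC.
  rewrite lee_fin.
  have := hC; rewrite -(ler_pM2l hd0) mulrA mulfV ?gt_eqF// mul1r mulr1.
  lra.
move=> w Ew Q hKL.
have hlt : (KL Q P < (2 * kappa)%:E)%E by apply: (le_lt_trans hKL); rewrite lte_fin; lra.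
have [y [g hg gy] ylt] := ereal_inf_lt hlt.
have hg' := hg; case: hg' => mg g0 gQ.
have gint : (\int[P]_f (g f)%:E = 1)%E.
  have := gQ _ measurableT; move=> <-; exact: probability_setT.
pose l i := ellQ ev Q (X i w).
have lE i : (\int[Q]_f (ev f (X i w))%:E = (l i)%:E)%E /\ 0 <= l i <= 1.
  exact: (int01 Q _ (mevz (X i w)) (fun f => e01' f (X i w))).
pose LDr := LD ev D Q.
have LDE : (\int[Q]_f (p f)%:E = LDr%:E)%E /\ 0 <= LDr <= 1.
  have [E1 E2] := int01 Q _ pm (fun f => (pE f).2).
  have eq1 : (\int[Q]_f (\int[D]_z (ev f z)%:E) = \int[Q]_f (p f)%:E)%E.
    by apply: eq_integral => f _; rewrite (pE f).1.
  by rewrite /LDr /LD eq1.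
pose psi f := lambda * p f + k * \sum_(i < m) (1 - ev f (X i w)).
have psiE f : psi f = phi f w + k * m%:R.
  rewrite /psi /phi sumrB sumr_const card_ord; ring.
have psi0 f : 0 <= psi f.
  apply: addr_ge0; first by apply: mulr_ge0; [exact: ltW | case: (pE f) => _ /andP[]].
  apply: mulr_ge0 => //; apply: sumr_ge0 => i _.
  by case/andP: (e01' f (X i w)) => _ H1; rewrite subr_ge0.
have mpsi : measurable_fun [set: F] psi.
  apply: measurable_funD; first exact: measurable_funM.
  apply: measurable_funM => //; apply: measurable_sum => i.
  exact: measurable_funB.
have IQpsi : (\int[Q]_f (psi f)%:E = (lambda * LDr + k * \sum_(i < m) (1 - l i))%:E)%E.
  have ms : measurable_fun [set: F] (fun f => \sum_(i < m) (1 - ev f (X i w))).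
    by apply: measurable_sum => i; exact: measurable_funB.
  have s0 f : 0 <= \sum_(i < m) (1 - ev f (X i w)).
    apply: sumr_ge0 => i _.
    by case/andP: (e01' f (X i w)) => _ H1; rewrite subr_ge0.
  rewrite /psi; under eq_integral do rewrite EFinD.
  rewrite ge0_integralD//; first last.
  - exact/measurable_EFinP/measurable_funM.
  - by move=> f _; rewrite lee_fin; apply: mulr_ge0.
  - exact/measurable_EFinP/measurable_funM.
  - by move=> f _; rewrite lee_fin; apply: mulr_ge0; [exact: ltW | case: (pE f) => _ /andP[]].
  under eq_integral do rewrite EFinM.
  rewrite ge0_integralZl_EFin//; first last.
  - exact: ltW.
  - exact/measurable_EFinP.
  - by move=> f _; rewrite lee_fin; case: (pE f) => _ /andP[].
  under [X in (_ + X)%E]eq_integral do rewrite EFinM.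
  rewrite [X in (_ + X)%E]ge0_integralZl_EFin//; first last.
  - exact/measurable_EFinP.
  - by move=> f _; rewrite lee_fin.
  rewrite LDE.1 EFinD !EFinM; congr (_ + _ * _)%E.
  under eq_integral do rewrite -sumEFin.
  rewrite ge0_integral_sum//; first last.
  - move=> i f _; rewrite lee_fin.
    by case/andP: (e01' f (X i w)) => _ H1; rewrite subr_ge0.
  - by move=> i; apply/measurable_EFinP; exact: measurable_funB.
  rewrite -sumEFin; apply: eq_bigr => i _.
  exact: (int_compl Q _ (mevz (X i w)) (fun f => e01' f (X i w))).
have lnd : ln delta <= 0 by apply: ln_le0; exact: ltW.
have mphi : measurable_fun [set: F] (fun f => phi f w).
  apply: measurable_funB; first exact: measurable_funM.
  by apply: measurable_funM => //; apply: measurable_sum => i.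
have mgl : measurable_fun [set: F] (fun f => g f * ln (g f)).
  exact: measurable_funM mg (measurableT_comp (@measurable_ln R) mg).
have gl1 f : -1 <= g f * ln (g f).
  have := @young R (g f) 0 (g0 f); rewrite mulr0 expR0 => Y.
  have := g0 f; lra.
have psiB f : g f * psi f + g f + 1 <=
    (g f * ln (g f) + 1) + delta * expR (phi f w) + g f * (k * m%:R - ln delta).
  have Y := @young R (g f) (phi f w + ln delta) (g0 f).
  rewrite expRD lnK ?posrE// in Y.
  rewrite psiE; move: Y; rewrite !mulrDr ?mulrBr; lra.
have INT : (\int[P]_f (g f * psi f + g f + 1)%:E <=
    \int[P]_f ((g f * ln (g f) + 1) + delta * expR (phi f w) + g f * (k * m%:R - ln delta))%:E)%E.
  apply: ge0_le_integral => //.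
  - by move=> f _; rewrite lee_fin !addr_ge0// mulr_ge0.
  - apply/measurable_EFinP; apply: measurable_funD => //.
    by apply: measurable_funD => //; exact: measurable_funM.
  - apply/measurable_EFinP; apply: measurable_funD.
      apply: measurable_funD; first exact: measurable_funD.
      by apply: measurable_funM => //; exact: measurableT_comp.
    exact: measurable_funM.
  - by move=> f _; rewrite lee_fin.
have C0 : 0 <= k * m%:R - ln delta by have := mulr_ge0 k0 (ltW m0); lra.
have L3 := int3 P (fun f => g f * psi f) g (fun _ => 1)
  (measurable_funM mg mpsi) mg (measurable_cst _)
  (fun f => mulr_ge0 (g0 f) (psi0 f)) g0 (fun _ => ler01).
have R3 := int3 P (fun f => g f * ln (g f) + 1) (fun f => delta * expR (phi f w))
  (fun f => g f * (k * m%:R - ln delta))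
  (measurable_funD mgl (measurable_cst _))
  (measurable_funM (measurable_cst _) (measurableT_comp (@measurable_expR R) mphi))
  (measurable_funM mg (measurable_cst _))
  (fun f => ltac:(have := gl1 f; lra))
  (fun f => mulr_ge0 (ltW hd0) (expR_ge0 _))
  (fun f => mulr_ge0 (g0 f) C0).
rewrite L3 R3 int_add1// gy in INT.
have e1 : (\int[P]_f (g f * psi f)%:E = \int[Q]_f (psi f)%:E)%E.
  rewrite -(density_change _ _ _ hg (fun f => (psi f)%:E)); last 2 first.
  - by move=> f; rewrite lee_fin.
  - exact/measurable_EFinP.
  by apply: eq_integral => f _; rewrite mulrC EFinM.
have e2 : (\int[P]_f (delta * expR (phi f w))%:E = delta%:E * H w)%E.
  under eq_integral do rewrite EFinM.
  rewrite ge0_integralZl_EFin//;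
    try (by move=> f _; rewrite lee_fin expR_ge0);
    try (exact/measurable_EFinP/measurableT_comp);
    try exact: ltW.
have e3 : (\int[P]_f (g f * (k * m%:R - ln delta))%:E = (k * m%:R - ln delta)%:E)%E.
  under eq_integral do rewrite mulrC EFinM.
  rewrite ge0_integralZl_EFin//;
    try (by move=> f _; rewrite lee_fin); try exact/measurable_EFinP.
  by rewrite gint mule1.
have e4 : (\int[P]_f (1%:E) = 1)%E.
  rewrite (_ : (fun _ => 1%:E) = cst 1%:E)// integral_cst// mul1e.
  exact: probability_setT.
rewrite e1 IQpsi gint e2 e3 e4 in INT.
have Hfin : H w = (fine (H w))%:E.
  rewrite fineK// ge0_fin_numE//; apply: (le_lt_trans Ew); exact: ltry.
have dH : delta * fine (H w) <= 1.
  have : ((fine (H w))%:E <= (delta^-1)%:E)%E by rewrite -Hfin.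
  rewrite lee_fin => hh.
  have := ler_wpM2l (ltW hd0) hh; rewrite mulfV ?gt_eqF//.
rewrite Hfin in INT.
have sumE : \sum_(i < m) (1 - l i) = m%:R - \sum_(i < m) l i.
  by rewrite sumrB sumr_const card_ord.
have key : lambda * LDr - k * \sum_(i < m) l i <= 2 * kappa - ln delta.
  move: ylt INT; clear gy; case: y => [yr| |] //=.
    rewrite !lte_fin -!EFinD lee_fin sumE => ylt INT.
    have : k * (m%:R - \sum_(i < m) l i) = k * m%:R - k * \sum_(i < m) l i by ring.
    lra.
have VS : h ^+ 2 * \sum_(i < m) l i <= \sum_(i < m) varterm ev h Q (X i w).
  rewrite mulr_sumr; apply: ler_sum => i _.
  exact: (var_lb ev Q h (X i w) (fun f => ev01 f (X i w)) (mevz (X i w)) hh0 hh1).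
have ln4 : ln (4 / delta) = ln 4 - ln delta.
  rewrite lnM ?posrE ?invr_gt0// lnV ?posrE//.
have ln40 : 0 <= ln (4 : R) by apply: ln_ge0; lra.
rewrite /Lhat -/LDr.
set S := \sum_(i < m) _.
set V := \sum_(i < m) _.
have mn0 : m%:R != 0 :> R by rewrite gt_eqF.
have h1 : lambda * (S / m%:R) = t * S by rewrite /t; field.
have h2 : lambda * (c / m%:R * V) = t * c * V by rewrite /t; field.
have h3 : t * c * (h ^+ 2 * S) <= t * c * V.
  by apply: ler_wpM2l => //; rewrite mulr_ge0// ltW.
have h4 : k * S = t * S + t * c * (h ^+ 2 * S) by rewrite /k /b; ring.
have fin : lambda * (LDr - S / m%:R - c / m%:R * V) <= 4 * (kappa + ln (4 / delta)).
  rewrite !mulrBr h1 h2 ln4.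
  have : lambda * LDr - k * S <= 2 * kappa - ln delta by exact: key.
  lra.
have -> : 4 / lambda * (kappa + ln (4 / delta)) = (4 * (kappa + ln (4 / delta))) / lambda.
  by rewrite mulrAC.
by rewrite ler_pdivlMr// mulrC.
Qed.
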